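(* For $\eta>0$ let $\Gamma$ be the boundary of the rectangle with vertices $\pm3\pm\mathbf i\eta/2$, traversed counterclockwise. Then $$\operatorname{Im}\Big[\oint_\Gamma m_0(z)m_0(z+\mathbf i\eta)\big(m_0(z+\mathbf i\eta)-m_0(z)\big)\,dz\Big]=2\pi+o(1)\quad\text{as }\eta\to0.$$
   Context: $m_0(z)=\int\frac{\rho(x)}{x-z}dx=\frac{-z+\sqrt{z^2-4}}2$ is the Stieltjes transform of the semicircle density $\rho(x)=\frac1{2\pi}\sqrt{4-x^2}\,\mathbb 1\{|x|\le2\}$, defined for $z\in\mathbb C\setminus[-2,2]$ (branch cut on $[-2,2]$, $\sqrt{z^2-4}\sim z$ as $|z|\to\infty$). *)

(* Defs.v *)
From Stdlib Require Import Reals.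
From Coquelicot Require Import Coquelicot.
Open Scope R_scope.

Definition rho (x : R) : R := sqrt (4 - x ^ 2) / (2 * PI).

Definition CRInt (f : R -> C) (a b : R) : C :=
  @RInt C_R_CompleteNormedModule f a b.

Definition m0 (z : C) : C :=
  CRInt (fun x => (RtoC (rho x) / (RtoC x - z))%C) (-2) 2.

Definition seg_integral (f : C -> C) (p q : C) : C :=
  CRInt (fun t => (f (p + RtoC t * (q - p)) * (q - p))%C) 0 1.

Definition rect_integral (f : C -> C) (a h : R) : C :=
  let v1 := (RtoC (-a) - Ci * RtoC h)%C in
  let v2 := (RtoC a - Ci * RtoC h)%C in
  let v3 := (RtoC a + Ci * RtoC h)%C in
  let v4 := (RtoC (-a) + Ci * RtoC h)%C in
  (seg_integral f v1 v2 + seg_integral f v2 v3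
   + seg_integral f v3 v4 + seg_integral f v4 v1)%C.

Definition integrand (eta : R) (z : C) : C :=
  (m0 z * m0 (z + Ci * RtoC eta) * (m0 (z + Ci * RtoC eta) - m0 z))%C.

(* Main.v *)
Require Import Defs.
From Stdlib Require Import Reals Lra Psatz.
From Coquelicot Require Import Coquelicot.
Open Scope R_scope.

Lemma pow2_sq (x : R) : x ^ 2 = x * x.
Proof. ring. Qed.
Ltac nra2 := rewrite ?pow2_sq in *; nra.

Lemma CD_pair (f g : R -> R) (x f' g' : R) :
  is_derive f x f' -> is_derive g x g' ->
  @is_derive R_AbsRing C_R_NormedModule (fun t => ((f t, g t) : C)) x ((f', g') : C).
Proof.
  intros Hf Hg.
  unfold is_derive.
  apply (filterdiff_comp'_2 (V:=R_NormedModule) (W := C_R_NormedModule) f g (fun u v => ((u, v) : C)) x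
    (fun y => scal y f') (fun y => scal y g') (fun u v => ((u, v) : C)) Hf Hg).
  apply filterdiff_linear.
  apply (is_linear_prod (K:=R_AbsRing) (T := prod_NormedModule R_AbsRing R_NormedModule R_NormedModule)
     (U:=R_NormedModule) (V:=R_NormedModule)).
  apply is_linear_fst. apply is_linear_snd.
Qed.

Lemma CD_fst (f : R -> C) (x : R) (l : C) :
  @is_derive R_AbsRing C_R_NormedModule f x l ->
  is_derive (fun t => fst (f t)) x (fst l).
Proof.
  intros H. unfold is_derive in *.
  apply (filterdiff_comp' (U:=R_NormedModule) (V:=C_R_NormedModule) (W:=R_NormedModule)
     f (fun c : C => fst c) x _ (fun c : C => fst c) H).
  apply filterdiff_linear.
  apply (is_linear_fst (K:=R_AbsRing) (U:=R_NormedModule) (V:=R_NormedModule)).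
Qed.

Lemma CD_snd (f : R -> C) (x : R) (l : C) :
  @is_derive R_AbsRing C_R_NormedModule f x l ->
  is_derive (fun t => snd (f t)) x (snd l).
Proof.
  intros H. unfold is_derive in *.
  apply (filterdiff_comp' (U:=R_NormedModule) (V:=C_R_NormedModule) (W:=R_NormedModule)
     f (fun c : C => snd c) x _ (fun c : C => snd c) H).
  apply filterdiff_linear.
  apply (is_linear_snd (K:=R_AbsRing) (U:=R_NormedModule) (V:=R_NormedModule)).
Qed.
Notation CDer f x l := (@is_derive R_AbsRing C_R_NormedModule f x l).

Lemma C_ext (a b : C) : fst a = fst b -> snd a = snd b -> a = b.
Proof. destruct a, b; simpl; intros; subst; reflexivity. Qed.

Lemma CD_comp (F : R -> C) x (L : C) :
  is_derive (fun t => fst (F t)) x (fst L) -> is_derive (fun t => snd (F t)) x (snd L) -> CDer F x L.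
Proof.
  intros H1 H2.
  pose proof (CD_pair _ _ _ _ _ H1 H2) as H.
  replace L with ((fst L, snd L) : C) by (destruct L; reflexivity).
  eapply is_derive_ext; [|exact H]. intros t; simpl. destruct (F t); reflexivity.
Qed.

Lemma CD_eq (F : R -> C) x (L L' : C) : CDer F x L -> L = L' -> CDer F x L'.
Proof. intros H ->; exact H. Qed.

Lemma rD_eq (F : R -> R) x (L L' : R) : is_derive F x L -> L = L' -> is_derive F x L'.
Proof. intros H ->; exact H. Qed.

Lemma CD_plus (f g : R -> C) x lf lg : CDer f x lf -> CDer g x lg ->
  CDer (fun t => (f t + g t)%C) x (lf + lg)%C.
Proof.
  intros Hf Hg. apply CD_comp; simpl.
  - apply (is_derive_plus (fun t => fst (f t)) (fun t => fst (g t))); apply CD_fst; auto.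
  - apply (is_derive_plus (fun t => snd (f t)) (fun t => snd (g t))); apply CD_snd; auto.
Qed.

Lemma CD_opp (f : R -> C) x lf : CDer f x lf -> CDer (fun t => (- f t)%C) x (- lf)%C.
Proof.
  intros Hf. apply CD_comp; simpl.
  - apply (is_derive_opp (fun t => fst (f t))); apply CD_fst; auto.
  - apply (is_derive_opp (fun t => snd (f t))); apply CD_snd; auto.
Qed.

Lemma CD_minus (f g : R -> C) x lf lg : CDer f x lf -> CDer g x lg ->
  CDer (fun t => (f t - g t)%C) x (lf - lg)%C.
Proof. intros; apply CD_plus; auto; apply CD_opp; auto. Qed.

Lemma CD_mult (f g : R -> C) x lf lg : CDer f x lf -> CDer g x lg ->
  CDer (fun t => (f t * g t)%C) x (lf * g x + f x * lg)%C.
Proof.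
  intros Hf Hg.
  pose proof (CD_fst _ _ _ Hf) as f1. pose proof (CD_snd _ _ _ Hf) as f2.
  pose proof (CD_fst _ _ _ Hg) as g1. pose proof (CD_snd _ _ _ Hg) as g2.
  apply CD_comp; simpl.
  - eapply rD_eq.
    apply (is_derive_minus (fun t => fst (f t) * fst (g t)) (fun t => snd (f t) * snd (g t))).
    apply (Derive.is_derive_mult _ _ _ _ _ f1 g1).
    apply (Derive.is_derive_mult _ _ _ _ _ f2 g2).
    simpl. unfold minus, plus, opp; simpl. ring.
  - eapply rD_eq.
    apply (is_derive_plus (fun t => fst (f t) * snd (g t)) (fun t => snd (f t) * fst (g t))).
    apply (Derive.is_derive_mult _ _ _ _ _ f1 g2).
    apply (Derive.is_derive_mult _ _ _ _ _ f2 g1).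
    simpl. unfold minus, plus, opp; simpl. ring.
Qed.

Lemma CD_const (c : C) x : CDer (fun _ => c) x (RtoC 0).
Proof. apply CD_comp; simpl; (eapply rD_eq; [apply (is_derive_const (K:=R_AbsRing) (V:=R_NormedModule))| reflexivity]). Qed.

Lemma CD_RtoC (f : R -> R) x l : is_derive f x l -> CDer (fun t => RtoC (f t)) x (RtoC l).
Proof. intros H; apply CD_comp; simpl; auto; (eapply rD_eq; [apply (is_derive_const (K:=R_AbsRing) (V:=R_NormedModule))| reflexivity]). Qed.

Lemma CD_cmult (c : C) (f : R -> C) x lf : CDer f x lf -> CDer (fun t => (c * f t)%C) x (c * lf)%C.
Proof.
  intros H. eapply CD_eq. apply CD_mult; [apply CD_const|exact H].
  apply C_ext; simpl; ring.
Qed.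

Definition E (t : R) : C := (cos t, sin t).
Lemma CD_E x : CDer E x (Ci * E x)%C.
Proof.
  apply CD_comp; simpl.
  - eapply rD_eq. apply is_derive_cos. ring.
  - eapply rD_eq. apply is_derive_sin. ring.
Qed.

(* logarithm for Re w > 0 *)
Definition CLog (w : C) : C := (ln (fst w ^ 2 + snd w ^ 2) / 2, atan (snd w / fst w)).

Lemma CD_Log (w : R -> C) x lw : CDer w x lw -> 0 < fst (w x) ->
  CDer (fun t => CLog (w t)) x (lw / w x)%C.
Proof.
  intros H Hpos.
  pose proof (CD_fst _ _ _ H) as u1. pose proof (CD_snd _ _ _ H) as v1.
  assert (Hn : fst (w x) ^ 2 + snd (w x) ^ 2 > 0) by nra.
  assert (HF : is_derive (fun t => fst (w t) ^ 2 + snd (w t) ^ 2) x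
                 (2 * fst (w x) * fst lw + 2 * snd (w x) * snd lw)).
  { eapply rD_eq. apply (is_derive_plus (fun t => fst (w t) ^ 2) (fun t => snd (w t) ^ 2)).
    apply is_derive_pow; exact u1. apply is_derive_pow; exact v1.
    unfold plus; simpl. ring. }
  apply CD_comp; simpl.
  - eapply rD_eq.
    eapply is_derive_ext with (f := fun t => / 2 * ln (fst (w t) ^ 2 + snd (w t) ^ 2)).
    { intros t; simpl. field. }
    apply is_derive_scal.
    apply (is_derive_comp ln (fun t => fst (w t) ^ 2 + snd (w t) ^ 2)).
    apply is_derive_ln. exact Hn. exact HF.
    unfold scal; simpl; unfold mult; simpl. field. lra.
  - eapply rD_eq.
    apply (is_derive_comp atan (fun t => snd (w t) / fst (w t))).
    apply is_derive_atan.
    apply is_derive_div. exact v1. exact u1. lra.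
    unfold scal; simpl; unfold mult; simpl. unfold Rsqr. field. split; nra.
Qed.

Notation CCont f x := (@continuous R_UniformSpace C_UniformSpace f x).

Lemma CC_pair (f g : R -> R) x : continuous f x -> continuous g x ->
  CCont (fun t => ((f t, g t) : C)) x.
Proof.
  intros Hf Hg.
  apply (continuous_comp_2 (W:=R_UniformSpace) (X:=C_UniformSpace) f g (fun u v => ((u,v) : C)) x Hf Hg).
  apply (continuous_ext (T:=prod_UniformSpace R_UniformSpace R_UniformSpace) (U:=C_UniformSpace) (fun p => p)).
  intros [a b]; reflexivity.
  apply (continuous_id (U:=C_UniformSpace)).
Qed.

Lemma CC_fst (f : R -> C) x : CCont f x -> continuous (fun t => fst (f t)) x.
Proof.
  intros H. apply (continuous_comp (V:=C_UniformSpace) f (fun c : C => fst c) x H).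
  destruct (f x) as [a b]. apply (continuous_fst (U:=R_UniformSpace) (V:=R_UniformSpace)).
Qed.

Lemma CC_snd (f : R -> C) x : CCont f x -> continuous (fun t => snd (f t)) x.
Proof.
  intros H. apply (continuous_comp (V:=C_UniformSpace) f (fun c : C => snd c) x H).
  destruct (f x) as [a b]. apply (continuous_snd (U:=R_UniformSpace) (V:=R_UniformSpace)).
Qed.

Lemma CC_comp (F : R -> C) x : continuous (fun t => fst (F t)) x -> continuous (fun t => snd (F t)) x -> CCont F x.
Proof.
  intros H1 H2. pose proof (CC_pair _ _ _ H1 H2) as H.
  eapply (continuous_ext (T:=R_UniformSpace) (U:=C_UniformSpace)); [|exact H].
  intros t; simpl; destruct (F t); reflexivity.
Qed.

Lemma rC_plus (f g : R -> R) x : continuous f x -> continuous g x -> continuous (fun t => f t + g t) x.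
Proof. intros; apply (continuous_plus f g); auto. Qed.
Lemma rC_opp (f : R -> R) x : continuous f x -> continuous (fun t => - f t) x.
Proof. intros; apply (continuous_opp f); auto. Qed.
Lemma rC_minus (f g : R -> R) x : continuous f x -> continuous g x -> continuous (fun t => f t - g t) x.
Proof. intros; apply rC_plus; auto; apply rC_opp; auto. Qed.
Lemma rC_mult (f g : R -> R) x : continuous f x -> continuous g x -> continuous (fun t => f t * g t) x.
Proof. intros; apply (continuous_mult f g); auto. Qed.
Lemma rC_const (c : R) x : continuous (fun _ : R => c) x.
Proof. apply continuous_const. Qed.
Lemma rC_id x : continuous (fun t : R => t) x.
Proof. apply continuous_id. Qed.
Lemma rC_inv (f : R -> R) x : continuous f x -> f x <> 0 -> continuous (fun t => / f t) x.
Proof. intros; apply continuous_Rinv_comp; auto. Qed.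
Lemma rC_pow (f : R -> R) x n : continuous f x -> continuous (fun t => f t ^ n) x.
Proof. intros H; induction n; simpl. apply rC_const. apply rC_mult; auto. Qed.

Lemma CC_plus (f g : R -> C) x : CCont f x -> CCont g x -> CCont (fun t => (f t + g t)%C) x.
Proof.
  intros Hf Hg; apply CC_comp; simpl; apply rC_plus;
  first [apply CC_fst | apply CC_snd]; auto.
Qed.
Lemma CC_opp (f : R -> C) x : CCont f x -> CCont (fun t => (- f t)%C) x.
Proof.
  intros Hf; apply CC_comp; simpl; apply rC_opp;
  first [apply CC_fst | apply CC_snd]; auto.
Qed.
Lemma CC_minus (f g : R -> C) x : CCont f x -> CCont g x -> CCont (fun t => (f t - g t)%C) x.
Proof. intros; apply CC_plus; auto; apply CC_opp; auto. Qed.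
Lemma CC_mult (f g : R -> C) x : CCont f x -> CCont g x -> CCont (fun t => (f t * g t)%C) x.
Proof.
  intros Hf Hg.
  pose proof (CC_fst _ _ Hf). pose proof (CC_snd _ _ Hf).
  pose proof (CC_fst _ _ Hg). pose proof (CC_snd _ _ Hg).
  apply CC_comp; simpl.
  apply rC_minus; apply rC_mult; auto.
  apply rC_plus; apply rC_mult; auto.
Qed.
Lemma CC_const (c : C) x : CCont (fun _ => c) x.
Proof. apply CC_comp; apply rC_const. Qed.
Lemma CC_RtoC (f : R -> R) x : continuous f x -> CCont (fun t => RtoC (f t)) x.
Proof. intros; apply CC_comp; simpl; auto; apply rC_const. Qed.
Lemma CC_inv (f : R -> C) x : CCont f x -> f x <> 0%C -> CCont (fun t => (/ f t)%C) x.
Proof.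
  intros Hf Hn.
  pose proof (CC_fst _ _ Hf). pose proof (CC_snd _ _ Hf).
  assert (Hp : fst (f x) ^ 2 + snd (f x) ^ 2 <> 0).
  { intro Hc. apply Hn. apply C_ext; simpl; nra. }
  unfold Cinv; apply CC_comp; cbn [fst snd].
  - apply rC_mult; auto. apply rC_inv; auto. apply rC_plus; apply rC_pow; auto.
  - apply rC_mult. apply rC_opp; auto. apply rC_inv; auto. apply rC_plus; apply rC_pow; auto.
Qed.
Lemma CC_div (f g : R -> C) x : CCont f x -> CCont g x -> g x <> 0%C -> CCont (fun t => (f t / g t)%C) x.
Proof. intros; apply CC_mult; auto; apply CC_inv; auto. Qed.
Lemma CC_E x : CCont E x.
Proof. apply CC_comp; simpl. apply continuous_cos. apply continuous_sin. Qed.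

Lemma cs1 t : cos t ^ 2 + sin t ^ 2 = 1.
Proof. rewrite <- (sin2_cos2 t); unfold Rsqr; ring. Qed.

Lemma E_neg t : E (- t) = (/ E t)%C.
Proof.
  unfold E, Cinv; cbn [fst snd]. rewrite cos_neg, sin_neg, cs1.
  apply C_ext; cbn [fst snd]; field.
Qed.

Lemma E_nz t : E t <> 0%C.
Proof. intro H. pose proof (cs1 t). unfold E in H. injection H; intros; nra2. Qed.

Lemma cos_E t : RtoC (2 * cos t) = (E t + / E t)%C.
Proof. rewrite <- E_neg. unfold E. apply C_ext; simpl; rewrite ?cos_neg, ?sin_neg; ring. Qed.

Lemma sin_E t : RtoC (4 * sin t ^ 2) = (- ((E t - / E t) * (E t - / E t)))%C.
Proof. rewrite <- E_neg. unfold E. apply C_ext; simpl; rewrite ?cos_neg, ?sin_neg; ring. Qed.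

Lemma rD_id x : is_derive (fun t : R => t) x 1.
Proof. apply (is_derive_id (K:=R_AbsRing)). Qed.
Lemma rD_neg x : is_derive Ropp x (-1).
Proof.
  exact (is_derive_opp (K:=R_AbsRing) (V:=R_NormedModule) (fun t => t) x 1 (rD_id x)).
Qed.

Lemma CD_Eneg x : CDer (fun t => E (- t)) x (- (Ci * E (- x)))%C.
Proof.
  apply CD_comp; unfold E; cbn [fst snd].
  - eapply rD_eq. apply (is_derive_comp cos Ropp). apply is_derive_cos.
    apply rD_neg.
    unfold scal; simpl; unfold mult; simpl. ring.
  - eapply rD_eq. apply (is_derive_comp sin Ropp). apply is_derive_sin.
    apply rD_neg.
    unfold scal; simpl; unfold mult; simpl. ring.
Qed.

Lemma CC_Eneg x : CCont (fun t => E (- t)) x.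
Proof.
  apply CC_comp; unfold E; cbn [fst snd].
  apply continuous_cos_comp, rC_opp, rC_id.
  apply (continuous_comp Ropp sin). apply rC_opp, rC_id. apply continuous_sin.
Qed.

Lemma CD_iLog (w : R -> C) x lw m : CDer w x lw -> 0 < fst (w x) -> lw = (Ci * m)%C ->
  CDer (fun t => Ci * CLog (w t))%C x (- (m / w x))%C.
Proof.
  intros H Hp ->. eapply CD_eq. apply CD_cmult. apply CD_Log; [exact H | exact Hp].
  set (u := (/ w x)%C). unfold Cdiv. fold u. destruct u as [a b]. destruct m as [m1 m2].
  apply C_ext; simpl; ring.
Qed.

Lemma Cmod_lt1 (q : C) : Cmod q < 1 -> fst q ^ 2 + snd q ^ 2 < 1.
Proof.
  intros H. unfold Cmod in H.
  assert (0 <= fst q ^ 2 + snd q ^ 2) by nra2.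
  destruct (Rlt_le_dec (fst q ^ 2 + snd q ^ 2) 1) as [h|h]; auto.
  apply sqrt_le_1_alt in h. rewrite sqrt_1 in h. lra.
Qed.

Lemma w_pos (q : C) t : Cmod q < 1 -> 0 < fst (1 - q * E t)%C.
Proof.
  intros H. apply Cmod_lt1 in H. pose proof (cs1 t) as H0.
  unfold E; simpl. destruct q as [a b]; simpl fst in *; simpl snd in *.
  assert (e : (a * cos t - b * sin t) ^ 2 + (a * sin t + b * cos t) ^ 2 = (a^2 + b^2) * (cos t ^2 + sin t ^2)) by ring.
  rewrite H0 in e.
  assert (h2 : (a * cos t - b * sin t) ^ 2 < 1). rewrite ?pow2_sq in *. pose proof (Rle_0_sqr (a * sin t + b * cos t)) as hh; unfold Rsqr in hh. lra.
  assert (h3 : a * cos t - b * sin t < 1) by nra2.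
  lra.
Qed.

Lemma w_nz (q : C) t : Cmod q < 1 -> (1 - q * E t)%C <> 0%C.
Proof. intros H Hc. pose proof (w_pos q t H). rewrite Hc in H0. simpl in H0. lra. Qed.
Lemma key_id (z q : C) t : q <> 0%C -> z = (q + / q)%C -> (1 - q * E t)%C <> 0%C ->
  (1 - q * E (- t))%C <> 0%C -> (RtoC (2 * cos t) - z)%C <> 0%C ->
  (((1 - q * q) / q) * (1 + q * E t / (1 - q * E t) + q * E (- t) / (1 - q * E (- t)))
    - RtoC (2 * cos t) - z)%C = (RtoC (4 * sin t ^ 2) / (RtoC (2 * cos t) - z))%C.
Proof.
  intros Hq Hz H1 H2 H3.
  rewrite E_neg in *. rewrite cos_E in *. rewrite sin_E. subst z.
  pose proof (E_nz t) as He. set (e := E t) in *.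
  field. cbv beta.
  split; [exact Hq|]. split; [exact He|]. split; [|split].
  - intro h. apply H3.
    transitivity (((e * e + 1) * q - (q * q + 1) * e) / (e * q))%C.
    field; auto. rewrite h. field; auto.
  - intro h. apply H2.
    transitivity ((e - q) / e)%C. field; auto. rewrite h. field; auto.
  - exact H1.
Qed.

Lemma rho_cont x : continuous rho x.
Proof.
  unfold rho. apply rC_mult. apply continuous_sqrt_comp. apply rC_minus. apply rC_const.
  apply rC_pow, rC_id. apply rC_const.
Qed.

Lemma fz_cont (z : C) x : (RtoC x - z)%C <> 0%C ->
  CCont (fun y => (RtoC (rho y) / (RtoC y - z))%C) x.
Proof.
  intros H. apply CC_div. apply CC_RtoC, rho_cont. apply CC_minus. apply CC_RtoC, rC_id.
  apply CC_const. exact H.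
Qed.

Lemma rho_cos t : 0 <= sin t -> rho (2 * cos t) = 2 * sin t / (2 * PI).
Proof.
  intros H. unfold rho. f_equal.
  replace (4 - (2 * cos t) ^ 2) with ((2 * sin t) ^ 2).
  apply sqrt_pow2. lra.
  pose proof (cs1 t). nra2.
Qed.

Lemma m0_formula (z q : C) : (q * q - z * q + 1 = 0)%C -> Cmod q < 1 ->
  (forall x, -2 <= x <= 2 -> (RtoC x - z)%C <> 0%C) -> m0 z = (- q)%C.
Proof.
  intros Hq Hm Hcut.
  assert (Hq0 : q <> 0%C).
  { intro h. rewrite h in Hq. apply C1_nz. rewrite <- Hq. ring. }
  assert (Hz : z = (q + / q)%C).
  { assert (e : (z * q = q * q + 1)%C).
    { transitivity (z * q + (q * q - z * q + 1))%C. rewrite Hq; ring. ring. }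
    transitivity ((z * q) / q)%C. field; auto. rewrite e. field; auto. }
  set (w1 := fun t => (1 - q * E t)%C).
  set (w2 := fun t => (1 - q * E (- t))%C).
  set (H := fun t => (RtoC t + Ci * CLog (w1 t) - Ci * CLog (w2 t))%C).
  set (K := RtoC (- / (2 * PI))).
  set (c1 := ((1 - q * q) / q)%C).
  set (G := fun t => (K * (c1 * H t - RtoC (2 * sin t) - z * RtoC t))%C).
  set (Gd := fun t => (K * (c1 * (RtoC 1 + q * E t / w1 t + q * E (- t) / w2 t)
                         - RtoC (2 * cos t) - z))%C).
  assert (HG : forall t, CDer G t (Gd t)).
  { intros t.
    assert (D1 : CDer w1 t (Ci * (- (q * E t)))%C).
    { eapply CD_eq. apply CD_minus. apply CD_const. apply CD_cmult. apply CD_E.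
      apply C_ext; simpl; ring. }
    assert (D2 : CDer w2 t (Ci * (q * E (- t)))%C).
    { eapply CD_eq. apply CD_minus. apply CD_const. apply CD_cmult. apply CD_Eneg.
      apply C_ext; simpl; ring. }
    assert (L1 := CD_iLog w1 t _ _ D1 (w_pos q t Hm) eq_refl).
    assert (L2 := CD_iLog w2 t _ _ D2 (w_pos q (- t) Hm) eq_refl).
    eapply CD_eq.
    { apply CD_cmult. apply CD_minus. apply CD_minus. apply CD_cmult.
      apply CD_minus. apply CD_plus. apply CD_RtoC, rD_id. exact L1. exact L2.
      apply CD_RtoC. apply is_derive_scal. apply is_derive_sin.
      apply CD_cmult. apply CD_RtoC, rD_id. }
    unfold Gd. unfold Cdiv. ring. }
  assert (Hw1 : forall t, w1 t <> 0%C) by (intros t; apply w_nz; auto).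
  assert (Hw2 : forall t, w2 t <> 0%C) by (intros t; apply w_nz; auto).
  assert (HD : forall t, (RtoC (2 * cos t) - z)%C <> 0%C).
  { intros t. apply Hcut. pose proof (COS_bound t). lra. }
  assert (HGc : forall t, CCont Gd t).
  { intros t. unfold Gd. apply CC_mult. apply CC_const. apply CC_minus. apply CC_minus.
    apply CC_mult. apply CC_const. apply CC_plus. apply CC_plus. apply CC_const.
    apply CC_div. apply CC_mult. apply CC_const. apply CC_E.
    unfold w1. apply CC_minus. apply CC_const. apply CC_mult. apply CC_const. apply CC_E. apply Hw1.
    apply CC_div. apply CC_mult. apply CC_const. apply CC_Eneg.
    unfold w2. apply CC_minus. apply CC_const. apply CC_mult. apply CC_const. apply CC_Eneg. apply Hw2.
    apply CC_RtoC. apply rC_mult. apply rC_const. apply continuous_cos. apply CC_const. }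
  assert (HI : is_RInt Gd 0 PI (minus (G PI) (G 0))).
  { apply (is_RInt_derive (V:=C_R_CompleteNormedModule) G Gd); intros; [apply HG | apply HGc]. }
  set (f := fun y => (RtoC (rho y) / (RtoC y - z))%C).
  assert (Hsub : RInt (V:=C_R_CompleteNormedModule) (fun y => scal (-2 * sin y) (f (2 * cos y))) 0 PI
                 = RInt (V:=C_R_CompleteNormedModule) f (2 * cos 0) (2 * cos PI)).
  { apply (RInt_comp (V:=C_R_CompleteNormedModule) f (fun y => 2 * cos y) (fun y => -2 * sin y) 0 PI).
    - intros x _. apply fz_cont. apply HD.
    - intros x _. split. eapply rD_eq. apply is_derive_scal. apply is_derive_cos. ring.
      apply rC_mult. apply rC_const. apply continuous_sin. }
  rewrite cos_0, cos_PI in Hsub. replace (2 * 1) with 2 in Hsub by ring.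
  replace (2 * -1) with (-2) in Hsub by ring.
  assert (Hext : RInt (V:=C_R_CompleteNormedModule) (fun y => scal (-2 * sin y) (f (2 * cos y))) 0 PI
                 = RInt (V:=C_R_CompleteNormedModule) Gd 0 PI).
  { apply RInt_ext. intros x Hx.
    pose proof PI_RGT_0.
    rewrite Rmin_left, Rmax_right in Hx by lra.
    assert (Hs : 0 < sin x) by (apply sin_gt_0; lra).
    unfold f. rewrite scal_R_Cmult. rewrite rho_cos by lra.
    unfold Gd, w1, w2, c1. rewrite (key_id z q x Hq0 Hz (Hw1 x) (Hw2 x) (HD x)).
    unfold Cdiv, K. rewrite !Cmult_assoc. f_equal.
    apply C_ext; simpl; field; lra. }
  rewrite Hext, (is_RInt_unique (V:=C_R_CompleteNormedModule) _ _ _ _ HI) in Hsub.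
  assert (Hex : ex_RInt (V:=C_R_CompleteNormedModule) f 2 (-2)).
  { apply ex_RInt_continuous. intros x Hx. apply fz_cont. apply Hcut.
    rewrite Rmin_right, Rmax_left in Hx by lra. lra. }
  unfold m0, CRInt. fold f.
  rewrite <- (opp_RInt_swap _ _ _ Hex). rewrite <- Hsub.
  assert (H0 : H 0 = RtoC 0).
  { unfold H, w1, w2. rewrite Ropp_0. ring. }
  assert (HP : H PI = RtoC PI).
  { unfold H, w1, w2.
    replace (E (- PI)) with (E PI). ring.
    unfold E. rewrite cos_neg, sin_neg, sin_PI, Ropp_0. reflexivity. }
  unfold G. rewrite H0, HP, sin_PI, sin_0.
  change (opp (minus ?a ?b)) with (- (a - b))%C.
  assert (KP : (K * RtoC PI = RtoC (-1) / RtoC 2)%C).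
  { unfold K. apply C_ext; simpl; field; pose proof PI_RGT_0; lra. }
  transitivity (- ((c1 - z) * (K * RtoC PI)))%C.
  { rewrite Rmult_0_r. ring. }
  rewrite KP. unfold c1. rewrite Hz. field. auto.
Qed.

Definition NotCut (z : C) := forall x, -2 <= x <= 2 -> (RtoC x - z)%C <> 0%C.
Definition isM (z m : C) := (m * m + z * m + 1 = 0)%C /\ Cmod m < 1.

Lemma Cmod_sq (c : C) : Cmod c ^ 2 = fst c ^ 2 + snd c ^ 2.
Proof. unfold Cmod. rewrite pow2_sqrt. reflexivity. rewrite !pow2_sq. nra. Qed.

Lemma Cmod_le_sq (a b : C) : fst a ^ 2 + snd a ^ 2 <= fst b ^ 2 + snd b ^ 2 -> Cmod a <= Cmod b.
Proof. intros H. unfold Cmod. apply sqrt_le_1_alt. exact H. Qed.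

Lemma csqrt_ex (w : C) : exists s : C, (s * s = w)%C.
Proof.
  destruct w as [a b].
  set (r := sqrt (a ^ 2 + b ^ 2)).
  assert (Hr0 : 0 <= a ^ 2 + b ^ 2) by nra2.
  assert (Hr : r * r = a ^ 2 + b ^ 2) by (apply sqrt_sqrt; exact Hr0).
  assert (Hra : Rabs a <= r).
  { unfold r. rewrite <- sqrt_Rsqr_abs. apply sqrt_le_1_alt. unfold Rsqr. nra2. }
  assert (Hp : 0 <= (r + a) / 2) by (pose proof (Rle_abs (- a)); rewrite Rabs_Ropp in *; lra).
  assert (Hm : 0 <= (r - a) / 2) by (pose proof (Rle_abs a); lra).
  set (s1 := sqrt ((r + a) / 2)). set (s2 := sqrt ((r - a) / 2)).
  assert (e1 : s1 * s1 = (r + a) / 2) by (apply sqrt_sqrt; auto).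
  assert (e2 : s2 * s2 = (r - a) / 2) by (apply sqrt_sqrt; auto).
  assert (e3 : s1 * s2 = sqrt (b ^ 2) / 2).
  { unfold s1, s2. rewrite <- sqrt_mult_alt by auto.
    replace ((r + a) / 2 * ((r - a) / 2)) with ((sqrt (b^2) / 2) ^ 2).
    apply sqrt_pow2. pose proof (sqrt_pos (b ^ 2)). lra.
    assert (hu : sqrt (b ^ 2) * sqrt (b ^ 2) = b ^ 2) by (apply sqrt_sqrt; nra2).
    replace ((sqrt (b ^ 2) / 2) ^ 2) with (sqrt (b ^ 2) * sqrt (b ^ 2) / 4) by field.
    rewrite hu.
    replace ((r + a) / 2 * ((r - a) / 2)) with ((r * r - a ^ 2) / 4) by field.
    rewrite Hr. field. }
  assert (eb : sqrt (b ^ 2) = Rabs b) by (rewrite <- pow2_abs; apply sqrt_pow2, Rabs_pos).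
  destruct (Rle_dec 0 b) as [hb|hb].
  - exists (s1, s2). apply C_ext; simpl.
    + lra.
    + rewrite eb, Rabs_right in e3 by lra. lra.
  - exists (s1, - s2). apply C_ext; simpl.
    + lra.
    + rewrite eb, Rabs_left in e3 by lra. lra.
Qed.

Lemma zeta_ex (z : C) : NotCut z -> exists q : C, (q * q - z * q + 1 = 0)%C /\ Cmod q < 1.
Proof.
  intros Hz.
  destruct (csqrt_ex (z * z - 4)%C) as [s Hs].
  set (q1 := ((z + s) / 2)%C). set (q2 := ((z - s) / 2)%C).
  assert (H2 : RtoC 2 <> 0%C) by (intro h; injection h; lra).
  assert (E1 : (q1 * q1 - z * q1 + 1 = 0)%C).
  { unfold q1. transitivity ((s * s - (z * z - 4)) / 4)%C. field; auto.
    rewrite Hs. field; auto. }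
  assert (E2 : (q2 * q2 - z * q2 + 1 = 0)%C).
  { unfold q2. transitivity ((s * s - (z * z - 4)) / 4)%C. field; auto.
    rewrite Hs. field; auto. }
  assert (P : (q1 * q2 = 1)%C).
  { unfold q1, q2. transitivity (((z * z - 4) - s * s) / 4 + 1)%C. field; auto.
    rewrite Hs. field; auto. }
  assert (S : (q1 + q2 = z)%C) by (unfold q1, q2; field; auto).
  assert (PM : Cmod q1 * Cmod q2 = 1) by (rewrite <- Cmod_mult, P; apply Cmod_1).
  pose proof (Cmod_ge_0 q1). pose proof (Cmod_ge_0 q2).
  destruct (Rtotal_order (Cmod q1) 1) as [h|[h|h]].
  - exists q1; auto.
  - exfalso. rewrite h in PM.
    assert (hq2 : Cmod q2 = 1) by lra.
    assert (c1 : fst q1 ^ 2 + snd q1 ^ 2 = 1) by (rewrite <- Cmod_sq, h; ring).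
    assert (c2 : fst q2 ^ 2 + snd q2 ^ 2 = 1) by (rewrite <- Cmod_sq, hq2; ring).
    destruct q1 as [a b], q2 as [c d]. cbn [fst snd] in *.
    assert (P1' : a * c - b * d = 1) by (injection P; intros; lra).
    assert (P2' : a * d + b * c = 0) by (injection P; intros; lra).
    assert (ec : c - a = a * (a * c - b * d - 1) + b * (a * d + b * c) + c * (1 - (a ^ 2 + b ^ 2))) by ring.
    rewrite P1', P2', c1 in ec.
    assert (ed : d + b = - b * (a * c - b * d - 1) + a * (a * d + b * c) + d * (1 - (a ^ 2 + b ^ 2))) by ring.
    rewrite P1', P2', c1 in ed.
    assert (c = a) by lra. assert (d = - b) by lra. subst c d.
    apply (Hz (2 * a)). split; nra2.
    rewrite <- S. apply C_ext; simpl; ring.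
  - exists q2. split; auto.
    assert (Cmod q2 = / Cmod q1) by (field_simplify_eq; lra; lra). 
    rewrite H1. rewrite <- Rinv_1. apply Rinv_lt_contravar; lra.
Qed.

Lemma m0_isM (z : C) : NotCut z -> isM z (m0 z).
Proof.
  intros Hz. destruct (zeta_ex z Hz) as [q [Hq Hm]].
  rewrite (m0_formula z q Hq Hm Hz). split.
  - rewrite <- Hq. ring.
  - rewrite Cmod_opp. exact Hm.
Qed.

Lemma Cmult_integral (a b : C) : (a * b = 0)%C -> a = 0%C \/ b = 0%C.
Proof.
  intros H. assert (Cmod a * Cmod b = 0) by (rewrite <- Cmod_mult, H; apply Cmod_0).
  destruct (Rmult_integral _ _ H0) as [h|h]; [left|right]; apply Cmod_eq_0; auto.
Qed.

Lemma quad_nz (z m : C) : (m * m + z * m + 1 = 0)%C -> m <> 0%C.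
Proof. intros H h. rewrite h in H. apply C1_nz. rewrite <- H. ring. Qed.

Lemma isM_uniq z m1 m2 : isM z m1 -> isM z m2 -> m1 = m2.
Proof.
  intros [E1 L1] [E2 L2].
  assert (e : ((m1 - m2) * (m1 + m2 + z) = 0)%C).
  { transitivity ((m1 * m1 + z * m1 + 1) - (m2 * m2 + z * m2 + 1))%C. ring. rewrite E1, E2. ring. }
  destruct (Cmult_integral _ _ e) as [h|h].
  - transitivity (m1 - m2 + m2)%C. ring. rewrite h. ring.
  - exfalso.
    assert (p : (m1 * m2 = 1)%C).
    { transitivity (- (m1 * (- m2)))%C. ring.
      replace (- m2)%C with (m1 + z)%C.
      transitivity (- (m1 * m1 + z * m1 + 1) + 1)%C. ring. rewrite E1. ring.
      transitivity (m1 + z - (m1 + m2 + z))%C. rewrite h. ring. ring. }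
    assert (Cmod m1 * Cmod m2 = 1) by (rewrite <- Cmod_mult, p; apply Cmod_1).
    pose proof (Cmod_ge_0 m1). pose proof (Cmod_ge_0 m2).
    assert (Cmod m1 * Cmod m2 < 1 * 1).
    { apply Rle_lt_trans with (Cmod m1 * 1). apply Rmult_le_compat_l; lra.
      apply Rmult_lt_compat_r; lra. }
    lra.
Qed.

Lemma quad_parts (z m : C) : (m * m + z * m + 1 = 0)%C ->
  fst m * fst m - snd m * snd m + fst z * fst m - snd z * snd m + 1 = 0 /\
  2 * fst m * snd m + fst z * snd m + snd z * fst m = 0.
Proof.
  intros H. split.
  - transitivity (fst (m * m + z * m + 1)%C). simpl. ring. rewrite H. reflexivity.
  - transitivity (snd (m * m + z * m + 1)%C). simpl. ring. rewrite H. reflexivity.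
Qed.

Lemma isM_conj z m : isM z m -> isM (Cconj z) (Cconj m).
Proof.
  intros [E L]. split; [|rewrite Cmod_conj; exact L].
  destruct (quad_parts _ _ E) as [e1 e2].
  apply C_ext; simpl; lra.
Qed.

Lemma isM_upper z m : isM z m -> 0 < snd z -> 0 < snd m.
Proof.
  intros [E L] Hy.
  destruct (quad_parts _ _ E) as [e1 e2].
  pose proof (quad_nz _ _ E) as Hn.
  apply Cmod_lt1 in L.
  destruct m as [a b], z as [x y]. cbn [fst snd] in *.
  set (n := a ^ 2 + b ^ 2) in *.
  assert (npos : 0 < n).
  { unfold n. destruct (Req_dec a 0) as [ha|ha]; [destruct (Req_dec b 0) as [hb|hb]|].
    - exfalso. apply Hn. subst. reflexivity.
    - rewrite !pow2_sq. pose proof (Rle_0_sqr a). unfold Rsqr in *.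
      assert (0 < b * b) by (apply Rsqr_pos_lt; auto). lra.
    - rewrite !pow2_sq. pose proof (Rle_0_sqr b). unfold Rsqr in *.
      assert (0 < a * a) by (apply Rsqr_pos_lt; auto). lra. }
  assert (e : b * (1 - n) = y * n).
  { assert (b * (n - 1) + y * n = - b * (a * a - b * b + x * a - y * b + 1) + a * (2 * a * b + x * b + y * a))
      by (unfold n; ring).
    rewrite e1, e2 in H. lra. }
  assert (0 < y * n) by (apply Rmult_lt_0_compat; lra).
  clearbody n.
  destruct (Rle_lt_dec b 0) as [hb|hb]; auto.
  exfalso. nra.
Qed.

Lemma isM_lip z z' m m' : isM z m -> isM z' m' -> Cmod (m' - m) * (/ Cmod m - 1) <= Cmod (z' - z).
Proof.
  intros [E1 L1] [E2 L2].
  pose proof (quad_nz _ _ E1) as Hm0.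
  assert (id : ((m' - m) * (m' - / m) = - ((z' - z) * m'))%C).
  { transitivity ((m' * m' + z' * m' + 1) - (m' / m) * (m * m + z * m + 1) - (z' - z) * m')%C.
    field; auto. rewrite E1, E2. ring. }
  assert (e : Cmod (m' - m) * Cmod (m' - / m) = Cmod (z' - z) * Cmod m')
    by (rewrite <- !Cmod_mult, id, Cmod_opp; reflexivity).
  assert (t1 : Cmod (/ m) <= Cmod (/ m - m') + Cmod m').
  { replace (/ m)%C with ((/ m - m') + m')%C at 1 by ring. apply Cmod_triangle. }
  assert (t2 : Cmod (/ m - m') = Cmod (m' - / m)).
  { rewrite <- Cmod_opp. f_equal. ring. }
  rewrite Cmod_inv in t1 by auto.
  pose proof (Cmod_ge_0 (m' - m)). pose proof (Cmod_ge_0 (z' - z)).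
  apply Rle_trans with (Cmod (m' - m) * Cmod (m' - / m)).
  - apply Rmult_le_compat_l; lra.
  - rewrite e. rewrite <- (Rmult_1_r (Cmod (z' - z))) at 2.
    apply Rmult_le_compat_l; lra.
Qed.

Lemma hold z z' m m' : (m * m + z * m + 1 = 0)%C -> (m' * m' + z' * m' + 1 = 0)%C ->
  Cmod m <= 1 -> Cmod m' <= 1 -> 0 <= snd m -> 0 <= snd m' ->
  Cmod (m - m') ^ 2 <= Cmod (z - z').
Proof.
  intros E1 E2 L1 L2 P1 P2.
  assert (id : ((m - m') * (m * m' - 1) = - ((z - z') * (m * m')))%C).
  { transitivity (m' * (m * m + z * m + 1) - m * (m' * m' + z' * m' + 1) - (z - z') * (m * m'))%C.
    ring. rewrite E1, E2. ring. }
  assert (e : Cmod (m - m') * Cmod (m * m' - 1) = Cmod (z - z') * (Cmod m * Cmod m'))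
    by (rewrite <- !Cmod_mult, id, Cmod_opp; reflexivity).
  assert (c : Cmod (m - m') <= Cmod (m * m' - 1)).
  { apply Cmod_le_sq.
    assert (n1 : fst m ^ 2 + snd m ^ 2 <= 1).
    { rewrite <- Cmod_sq. pose proof (Cmod_ge_0 m). rewrite pow2_sq. nra. }
    assert (n2 : fst m' ^ 2 + snd m' ^ 2 <= 1).
    { rewrite <- Cmod_sq. pose proof (Cmod_ge_0 m'). rewrite pow2_sq. nra. }
    destruct m as [a b], m' as [c d]. cbn [fst snd] in *. simpl.
    assert (k : (a * c - b * d - 1) ^ 2 + (a * d + b * c) ^ 2 - ((a - c) ^ 2 + (b - d) ^ 2)
                = (1 - (a ^ 2 + b ^ 2)) * (1 - (c ^ 2 + d ^ 2)) + 4 * (b * d)) by ring.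
    assert (0 <= (1 - (a ^ 2 + b ^ 2)) * (1 - (c ^ 2 + d ^ 2))) by (apply Rmult_le_pos; lra).
    assert (0 <= b * d) by (apply Rmult_le_pos; lra).
    replace ((a * c - b * d - 1) ^ 2 + (a * d + b * c) ^ 2) with
      ((a * c - b * d - 1) ^ 2 + (a * d + b * c) ^ 2) by reflexivity.
    ring_simplify. ring_simplify in k. lra. }
  pose proof (Cmod_ge_0 (m - m')). pose proof (Cmod_ge_0 (z - z')).
  pose proof (Cmod_ge_0 m). pose proof (Cmod_ge_0 m').
  assert (Cmod m * Cmod m' <= 1).
  { rewrite <- (Rmult_1_r 1). apply Rmult_le_compat; lra. }
  rewrite pow2_sq.
  apply Rle_trans with (Cmod (m - m') * Cmod (m * m' - 1)).
  - apply Rmult_le_compat_l; lra.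
  - rewrite e. rewrite <- (Rmult_1_r (Cmod (z - z'))) at 2.
    apply Rmult_le_compat_l; lra.
Qed.

Lemma fst_le_Cmod (c : C) : Rabs (fst c) <= Cmod c.
Proof. eapply Rle_trans; [|apply Rmax_Cmod]. apply Rmax_l. Qed.
Lemma snd_le_Cmod (c : C) : Rabs (snd c) <= Cmod c.
Proof. eapply Rle_trans; [|apply Rmax_Cmod]. apply Rmax_r. Qed.

Lemma rC_epsdelta (g : R -> R) t0 :
  (forall eps, 0 < eps -> exists d, 0 < d /\ forall t, Rabs (t - t0) < d -> Rabs (g t - g t0) < eps) ->
  continuous g t0.
Proof.
  intros H. apply continuity_pt_filterlim.
  intros eps Heps. destruct (H eps Heps) as [d [Hd Ht]].
  exists d. split; auto. intros x [_ Hx]. apply Ht. exact Hx.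
Qed.

Lemma CC_epsdelta (phi : R -> C) t0 :
  (forall eps, 0 < eps -> exists d, 0 < d /\ forall t, Rabs (t - t0) < d -> Cmod (phi t - phi t0) < eps) ->
  CCont phi t0.
Proof.
  intros H. apply CC_comp; apply rC_epsdelta; intros eps Heps;
  destruct (H eps Heps) as [d [Hd Ht]]; exists d; split; auto; intros t Hlt;
  specialize (Ht t Hlt).
  - eapply Rle_lt_trans; [|exact Ht]. 
    replace (fst (phi t) - fst (phi t0)) with (fst (phi t - phi t0)%C) by (simpl; ring).
    apply fst_le_Cmod.
  - eapply Rle_lt_trans; [|exact Ht].
    replace (snd (phi t) - snd (phi t0)) with (snd (phi t - phi t0)%C) by (simpl; ring).
    apply snd_le_Cmod.
Qed.

Definition NC (z : C) := snd z <> 0 \/ 2 < Rabs (fst z).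

Lemma NC_NotCut z : NC z -> NotCut z.
Proof.
  intros [h|h] x Hx e.
  - apply h. transitivity (- snd (RtoC x - z)%C). simpl. ring. rewrite e. simpl. ring.
  - assert (fst z = x). { transitivity (x - fst (RtoC x - z)%C). simpl. ring. rewrite e. simpl. ring. }
    subst x. apply Rabs_le in Hx. lra.
Qed.

Lemma path_fst (p d : C) t : fst (p + RtoC t * d)%C = fst p + t * fst d.
Proof. simpl. ring. Qed.
Lemma path_snd (p d : C) t : snd (p + RtoC t * d)%C = snd p + t * snd d.
Proof. simpl. ring. Qed.

Lemma path_diff (p d : C) t t0 : Cmod ((p + RtoC t * d) - (p + RtoC t0 * d))%C = Rabs (t - t0) * Cmod d.
Proof.
  replace ((p + RtoC t * d) - (p + RtoC t0 * d))%C with (RtoC (t - t0) * d)%C.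
  rewrite Cmod_mult, Cmod_R. reflexivity.
  apply C_ext; simpl; ring.
Qed.

Lemma NC_open (p d : C) t0 : NC (p + RtoC t0 * d)%C ->
  exists r, 0 < r /\ forall t, Rabs (t - t0) < r -> NC (p + RtoC t * d)%C.
Proof.
  intros Hn. pose proof (Cmod_ge_0 d) as Hd.
  pose proof (fst_le_Cmod d). pose proof (snd_le_Cmod d).
  destruct Hn as [h|h]; rewrite ?path_fst, ?path_snd in h.
  - exists (Rabs (snd p + t0 * snd d) / (Cmod d + 1)). split.
    { apply Rdiv_lt_0_compat. apply Rabs_pos_lt; auto. lra. }
    intros t Ht. left. rewrite path_snd. intro e.
    assert (snd p + t0 * snd d = - ((t - t0) * snd d)) by lra.
    rewrite H1, Rabs_Ropp, Rabs_mult in Ht.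
    assert (Rabs (t - t0) * Rabs (snd d) <= Rabs (t - t0) * Cmod d) by (apply Rmult_le_compat_l; auto; apply Rabs_pos).
    apply (Rmult_lt_compat_r (Cmod d + 1)) in Ht; [|lra].
    unfold Rdiv in Ht. rewrite Rmult_assoc, Rinv_l, Rmult_1_r in Ht by lra.
    pose proof (Rabs_pos (t - t0)). nra.
  - exists ((Rabs (fst p + t0 * fst d) - 2) / (Cmod d + 1)). split.
    { apply Rdiv_lt_0_compat; lra. }
    intros t Ht. right. rewrite path_fst.
    replace (fst p + t * fst d) with ((fst p + t0 * fst d) + (t - t0) * fst d) by ring.
    pose proof (Rabs_triang_inv (fst p + t0 * fst d) (- ((t - t0) * fst d))) as T.
    replace (fst p + t0 * fst d - - ((t - t0) * fst d)) with ((fst p + t0 * fst d) + (t - t0) * fst d) in T by ring.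
    rewrite Rabs_Ropp, Rabs_mult in T.
    assert (Rabs (t - t0) * Rabs (fst d) <= Rabs (t - t0) * Cmod d) by (apply Rmult_le_compat_l; auto; apply Rabs_pos).
    apply (Rmult_lt_compat_r (Cmod d + 1)) in Ht; [|lra].
    unfold Rdiv in Ht. rewrite Rmult_assoc, Rinv_l, Rmult_1_r in Ht by lra.
    pose proof (Rabs_pos (t - t0)). nra.
Qed.

Lemma m0_cont_path (p d : C) t0 : NC (p + RtoC t0 * d)%C ->
  CCont (fun t => m0 (p + RtoC t * d)%C) t0.
Proof.
  intros Hn. destruct (NC_open p d t0 Hn) as [r [Hr Hop]].
  set (z0 := (p + RtoC t0 * d)%C) in *.
  pose proof (m0_isM z0 (NC_NotCut _ Hn)) as HM.
  assert (Hm0 : m0 z0 <> 0%C) by (apply (quad_nz z0); apply HM).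
  assert (Hpos : 0 < Cmod (m0 z0)) by (apply Cmod_gt_0; auto).
  assert (Hk : 0 < / Cmod (m0 z0) - 1).
  { destruct HM as [_ L]. assert (1 < / Cmod (m0 z0)).
    { rewrite <- Rinv_1. apply Rinv_lt_contravar; lra. } lra. }
  apply CC_epsdelta. intros eps Heps.
  exists (Rmin r (eps * (/ Cmod (m0 z0) - 1) / (Cmod d + 1))). split.
  { apply Rmin_pos; auto. apply Rdiv_lt_0_compat. apply Rmult_lt_0_compat; lra.
    pose proof (Cmod_ge_0 d); lra. }
  intros t Ht.
  assert (Ht1 : Rabs (t - t0) < r) by (eapply Rlt_le_trans; [exact Ht|apply Rmin_l]).
  assert (Ht2 : Rabs (t - t0) < eps * (/ Cmod (m0 z0) - 1) / (Cmod d + 1))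
    by (eapply Rlt_le_trans; [exact Ht|apply Rmin_r]).
  pose proof (m0_isM _ (NC_NotCut _ (Hop t Ht1))) as HM'.
  pose proof (isM_lip _ _ _ _ HM HM') as L.
  assert (PD : Cmod ((p + RtoC t * d) - z0)%C = Rabs (t - t0) * Cmod d) by (unfold z0; apply path_diff).
  rewrite PD in L.
  pose proof (Cmod_ge_0 d). pose proof (Rabs_pos (t - t0)).
  apply (Rmult_lt_reg_r (/ Cmod (m0 z0) - 1)); auto.
  eapply Rle_lt_trans. exact L.
  apply (Rmult_lt_compat_r (Cmod d + 1)) in Ht2; [|lra].
  unfold Rdiv in Ht2. rewrite Rmult_assoc, Rinv_l, Rmult_1_r in Ht2 by lra.
  nra.
Qed.

Definition Lf (t : R) : R := 6 * sqrt (4 - (-3 + 6 * t) ^ 2).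

Lemma Lf_cont t : continuous Lf t.
Proof.
  unfold Lf. apply rC_mult. apply rC_const. apply continuous_sqrt_comp.
  apply rC_minus. apply rC_const. apply rC_pow. apply rC_plus. apply rC_const.
  apply rC_mult. apply rC_const. apply rC_id.
Qed.

Lemma Lf_ex a b : ex_RInt Lf a b.
Proof. apply (ex_RInt_continuous (V:=R_CompleteNormedModule)). intros; apply Lf_cont. Qed.

Lemma rD_const (c x : R) : is_derive (fun _ : R => c) x 0.
Proof. eapply rD_eq; [apply (is_derive_const (K:=R_AbsRing) (V:=R_NormedModule))| reflexivity]. Qed.

Lemma int_sin2 : RInt (fun t => 4 * sin t ^ 2) 0 PI = 2 * PI.
Proof.
  assert (Hd : forall x, Rmin 0 PI <= x <= Rmax 0 PI ->
     is_derive (fun t => 2 * t - 2 * sin t * cos t) x (4 * sin x ^ 2)).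
  { intros x _. eapply rD_eq.
    apply (is_derive_minus (fun t => 2 * t) (fun t => 2 * sin t * cos t)).
    apply is_derive_scal, rD_id.
    apply (Derive.is_derive_mult (fun t => 2 * sin t) cos). apply is_derive_scal, is_derive_sin.
    apply is_derive_cos.
    unfold minus, plus, opp; simpl. pose proof (cs1 x). nra2. }
  assert (Hc : forall x, Rmin 0 PI <= x <= Rmax 0 PI -> continuous (fun t => 4 * sin t ^ 2) x).
  { intros x _. apply rC_mult. apply rC_const. apply rC_pow. apply continuous_sin. }
  pose proof (is_RInt_derive (V:=R_CompleteNormedModule) _ _ 0 PI Hd Hc) as H.
  apply is_RInt_unique in H. rewrite H.
  unfold minus, plus, opp; simpl. rewrite sin_PI, cos_PI, sin_0, cos_0. ring.
Qed.

Lemma int_Lf : RInt Lf 0 1 = 2 * PI.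
Proof.
  rewrite <- (RInt_Chasles Lf 0 (1/6) 1) by apply Lf_ex.
  rewrite <- (RInt_Chasles Lf (1/6) (5/6) 1) by apply Lf_ex.
  assert (Z1 : RInt Lf 0 (1/6) = 0).
  { rewrite (RInt_ext Lf (fun _ => 0)). rewrite RInt_const. apply Rmult_0_r.
    intros x Hx. rewrite Rmin_left, Rmax_right in Hx by lra. unfold Lf.
    rewrite sqrt_neg_0. apply Rmult_0_r. rewrite pow2_sq. nra. }
  assert (Z2 : RInt Lf (5/6) 1 = 0).
  { rewrite (RInt_ext Lf (fun _ => 0)). rewrite RInt_const. apply Rmult_0_r.
    intros x Hx. rewrite Rmin_left, Rmax_right in Hx by lra. unfold Lf.
    rewrite sqrt_neg_0. apply Rmult_0_r. rewrite pow2_sq. nra. }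
  assert (M : RInt Lf (1/6) (5/6) = 2 * PI).
  { transitivity (RInt Lf ((fun t => (3 - 2 * cos t) / 6) 0) ((fun t => (3 - 2 * cos t) / 6) PI)).
    { cbv beta. rewrite cos_0, cos_PI. f_equal; field. }
    rewrite <- (RInt_comp (V:=R_CompleteNormedModule) Lf (fun t => (3 - 2 * cos t) / 6) (fun t => sin t / 3) 0 PI).
    rewrite <- int_sin2. apply RInt_ext.
    intros x Hx. pose proof PI_RGT_0. rewrite Rmin_left, Rmax_right in Hx by lra.
    assert (0 < sin x) by (apply sin_gt_0; lra).
    unfold scal; simpl; unfold mult; simpl. unfold Lf.
    replace (4 - (-3 + 6 * ((3 - 2 * cos x) / 6)) ^ 2) with ((2 * sin x) ^ 2)
      by (pose proof (cs1 x); field_simplify; nra2).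
    rewrite sqrt_pow2 by lra. field.
    intros x _. apply Lf_cont.
    intros x _. split.
    eapply rD_eq. apply is_derive_div. apply (is_derive_minus (fun _ => 3) (fun t => 2 * cos t)). apply rD_const.
    apply is_derive_scal, is_derive_cos. apply rD_const. lra.
    unfold minus, plus, opp, zero; simpl. field.
    apply rC_mult. apply continuous_sin. apply rC_const. }
  unfold plus; simpl. rewrite Z1, Z2, M. ring.
Qed.

Lemma Rabs_le_b x a : Rabs x <= a -> - a <= x <= a.
Proof. unfold Rabs; destruct (Rcase_abs x); lra. Qed.

Definition bnd (x : R) : C :=
  if Rle_dec (Rabs x) 2 then ((- x / 2, sqrt (4 - x ^ 2) / 2) : C)
  else if Rlt_dec 0 x then (((- x + sqrt (x ^ 2 - 4)) / 2, 0) : C)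
  else (((- x - sqrt (x ^ 2 - 4)) / 2, 0) : C).

Lemma bnd_props x :
  (bnd x * bnd x + RtoC x * bnd x + 1 = 0)%C /\ Cmod (bnd x) <= 1 /\ 0 <= snd (bnd x) /\
  snd (bnd x) * (fst (bnd x) ^ 2 + snd (bnd x) ^ 2) = sqrt (4 - x ^ 2) / 2.
Proof.
  unfold bnd. destruct (Rle_dec (Rabs x) 2) as [h|h].
  - apply Rabs_le_b in h.
    assert (h4 : 0 <= 4 - x ^ 2) by (rewrite pow2_sq; nra).
    pose proof (sqrt_sqrt _ h4) as hs. pose proof (sqrt_pos (4 - x ^ 2)).
    set (s := sqrt (4 - x ^ 2)) in *.
    assert (n : (- x / 2) ^ 2 + (s / 2) ^ 2 = 1) by (rewrite !pow2_sq in *; nra).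
    split; [|split; [|split]].
    + apply C_ext; simpl. rewrite pow2_sq in hs. nra. field.
    + unfold Cmod; simpl fst; simpl snd. rewrite n, sqrt_1. lra.
    + simpl. lra.
    + simpl fst; simpl snd. rewrite n. ring.
  - assert (hx : 2 < Rabs x) by lra.
    assert (h4 : 0 <= x ^ 2 - 4).
    { rewrite pow2_sq. unfold Rabs in hx; destruct (Rcase_abs x); nra. }
    assert (hn : 4 - x ^ 2 <= 0) by lra.
    pose proof (sqrt_sqrt _ h4) as hs. pose proof (sqrt_pos (x ^ 2 - 4)).
    set (u := sqrt (x ^ 2 - 4)) in *.
    rewrite (sqrt_neg_0 _ hn).
    destruct (Rlt_dec 0 x) as [p|p].
    + rewrite Rabs_right in hx by lra.
      assert (u < x) by (rewrite pow2_sq in hs; nra).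
      assert (x - 2 <= u) by (rewrite pow2_sq in hs; nra).
      split; [|split; [|split]].
      * apply C_ext; simpl. rewrite pow2_sq in hs. nra. field.
      * unfold Cmod; simpl fst; simpl snd. rewrite <- sqrt_1. apply sqrt_le_1_alt.
        rewrite !pow2_sq. nra.
      * simpl; lra.
      * simpl; field.
    + rewrite Rabs_left1 in hx by lra.
      assert (u < - x) by (rewrite pow2_sq in hs; nra).
      assert (- x - 2 <= u) by (rewrite pow2_sq in hs; nra).
      split; [|split; [|split]].
      * apply C_ext; simpl. rewrite pow2_sq in hs. nra. field.
      * unfold Cmod; simpl fst; simpl snd. rewrite <- sqrt_1. apply sqrt_le_1_alt.
        rewrite !pow2_sq. nra.
      * simpl; lra.
      * simpl; field.
Qed.

Lemma Cmod_rev (p b : C) : Rabs (Cmod p - Cmod b) <= Cmod (p - b).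
Proof.
  assert (t1 : Cmod p <= Cmod (p - b) + Cmod b).
  { replace p with ((p - b) + b)%C at 1 by ring. apply Cmod_triangle. }
  assert (t2 : Cmod b <= Cmod (p - b) + Cmod p).
  { replace b with (- (p - b) + p)%C at 1 by ring. rewrite <- (Cmod_opp (p - b)). apply Cmod_triangle. }
  unfold Rabs; destruct (Rcase_abs (Cmod p - Cmod b)); lra.
Qed.

Lemma phi_lip (p b : C) : Cmod p <= 1 -> Cmod b <= 1 ->
  Rabs (snd p * (fst p ^ 2 + snd p ^ 2) - snd b * (fst b ^ 2 + snd b ^ 2)) <= 3 * Cmod (p - b).
Proof.
  intros Hp Hb. rewrite <- !Cmod_sq.
  set (P := Cmod p) in *. set (B := Cmod b) in *. set (D := Cmod (p - b)).
  assert (h1 : Rabs (snd p - snd b) <= D).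
  { unfold D. replace (snd p - snd b) with (snd (p - b)%C) by (simpl; ring). apply snd_le_Cmod. }
  assert (h2 : Rabs (snd b) <= B) by apply snd_le_Cmod.
  assert (h3 : Rabs (P - B) <= D) by apply Cmod_rev.
  assert (P0 : 0 <= P) by apply Cmod_ge_0. assert (B0 : 0 <= B) by apply Cmod_ge_0.
  replace (snd p * P ^ 2 - snd b * B ^ 2) with ((snd p - snd b) * (P * P) + snd b * ((P - B) * (P + B))) by ring.
  eapply Rle_trans. apply Rabs_triang. rewrite (Rabs_mult (snd p - snd b) (P * P)), (Rabs_mult (snd b) ((P - B) * (P + B))), (Rabs_mult (P - B) (P + B)).
  rewrite (Rabs_right (P * P)) by nra. rewrite (Rabs_right (P + B)) by nra.
  assert (Rabs (snd p - snd b) * (P * P) <= D * 1).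
  { apply Rmult_le_compat; try apply Rabs_pos; try nra. }
  assert (Rabs (snd b) * (Rabs (P - B) * (P + B)) <= 1 * (D * 2)).
  { apply Rmult_le_compat; try apply Rabs_pos; try lra.
    apply Rmult_le_pos; [apply Rabs_pos|lra].
    apply Rmult_le_compat; try apply Rabs_pos; lra. }
  lra.
Qed.

Lemma Cmod_sqrt_le (c : C) (e : R) : Cmod c ^ 2 <= e -> Cmod c <= sqrt e.
Proof.
  intros H. rewrite <- (sqrt_pow2 (Cmod c)) by apply Cmod_ge_0. apply sqrt_le_1_alt. exact H.
Qed.

Lemma Cmod_imag (e : R) : 0 <= e -> Cmod (Ci * RtoC e)%C = e.
Proof.
  intros H. unfold Cmod; simpl. replace ((0 * e - 1 * 0) * ((0 * e - 1 * 0) * 1) + (0 * 0 + 1 * e) * ((0 * 0 + 1 * e) * 1)) with (e ^ 2) by ring.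
  apply sqrt_pow2; auto.
Qed.

Lemma F_bound eta z : NC z -> NC (z + Ci * RtoC eta)%C -> Cmod (integrand eta z) <= 2.
Proof.
  intros H1 H2. unfold integrand.
  destruct (m0_isM _ (NC_NotCut _ H1)) as [_ L1].
  destruct (m0_isM _ (NC_NotCut _ H2)) as [_ L2].
  set (a := m0 z) in *. set (b := m0 (z + Ci * RtoC eta)%C) in *.
  rewrite !Cmod_mult.
  assert (Cmod (b - a) <= 2).
  { eapply Rle_trans. replace (b - a)%C with (b + - a)%C by ring. apply Cmod_triangle.
    rewrite Cmod_opp. lra. }
  pose proof (Cmod_ge_0 a). pose proof (Cmod_ge_0 b). pose proof (Cmod_ge_0 (b - a)).
  assert (Cmod a * Cmod b <= 1 * 1) by (apply Rmult_le_compat; lra).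
  assert (Cmod a * Cmod b * Cmod (b - a) <= 1 * 2) by (apply Rmult_le_compat; try lra; apply Rmult_le_pos; lra).
  lra.
Qed.

Lemma F_top eta z : 0 < eta -> 0 < snd z -> Cmod (integrand eta z) <= sqrt eta.
Proof.
  intros He Hz.
  assert (N1 : NC z) by (left; lra).
  assert (N2 : NC (z + Ci * RtoC eta)%C) by (left; simpl; lra).
  pose proof (m0_isM _ (NC_NotCut _ N1)) as M1.
  pose proof (m0_isM _ (NC_NotCut _ N2)) as M2.
  pose proof (isM_upper _ _ M1 Hz) as U1.
  pose proof (isM_upper _ _ M2 ltac:(simpl; lra)) as U2.
  destruct M1 as [E1 L1], M2 as [E2 L2].
  unfold integrand.
  set (a := m0 z) in *. set (b := m0 (z + Ci * RtoC eta)%C) in *.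
  pose proof (hold _ _ _ _ E2 E1 ltac:(lra) ltac:(lra) ltac:(lra) ltac:(lra)) as Hh.
  replace (z + Ci * RtoC eta - z)%C with (Ci * RtoC eta)%C in Hh by ring.
  rewrite Cmod_imag in Hh by lra.
  apply Cmod_sqrt_le in Hh.
  rewrite !Cmod_mult.
  pose proof (Cmod_ge_0 a). pose proof (Cmod_ge_0 b). pose proof (Cmod_ge_0 (b - a)).
  assert (Cmod a * Cmod b <= 1 * 1) by (apply Rmult_le_compat; lra).
  assert (Cmod a * Cmod b * Cmod (b - a) <= 1 * sqrt eta) by (apply Rmult_le_compat; try lra; apply Rmult_le_pos; lra).
  lra.
Qed.

Lemma F_bottom eta x : 0 < eta ->
  Rabs (snd (integrand eta ((x, (- (eta / 2))%R) : C) * RtoC 6)%C - 6 * sqrt (4 - x ^ 2)) <= 36 * sqrt eta.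
Proof.
  intros He.
  set (z := ((x, eta / 2) : C)).
  assert (Nz : NC z) by (left; simpl; lra).
  pose proof (m0_isM _ (NC_NotCut _ Nz)) as M.
  assert (Nc : NC (Cconj z)) by (left; simpl; lra).
  assert (ec : m0 (Cconj z) = Cconj (m0 z)).
  { apply isM_uniq with (z := Cconj z). apply m0_isM, NC_NotCut, Nc. apply isM_conj, M. }
  assert (e1 : ((x, (- (eta / 2))%R) : C) = Cconj z) by (unfold z, Cconj; reflexivity).
  assert (e2 : (((x, (- (eta / 2))%R) : C) + Ci * RtoC eta)%C = z) by (unfold z; apply C_ext; simpl; field).
  unfold integrand. rewrite e2, e1, ec.
  pose proof (isM_upper _ _ M ltac:(simpl; lra)) as U.
  destruct M as [E L].
  destruct (bnd_props x) as [Eb [Lb [Ib Vb]]].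
  set (p := m0 z) in *. set (b := bnd x) in *.
  assert (Hh := hold _ _ _ _ E Eb ltac:(lra) Lb ltac:(lra) Ib).
  replace (z - RtoC x)%C with (Ci * RtoC (eta / 2))%C in Hh by (unfold z; apply C_ext; simpl; field).
  rewrite Cmod_imag in Hh by lra.
  apply Cmod_sqrt_le in Hh.
  assert (sqrt (eta / 2) <= sqrt eta) by (apply sqrt_le_1_alt; lra).
  pose proof (phi_lip p b ltac:(lra) Lb) as PL.
  rewrite Vb in PL.
  replace (snd (Cconj p * p * (p - Cconj p) * RtoC 6)%C) with (12 * (snd p * (fst p ^ 2 + snd p ^ 2)))
    by (destruct p; simpl; ring).
  replace (12 * (snd p * (fst p ^ 2 + snd p ^ 2)) - 6 * sqrt (4 - x ^ 2))
    with (12 * (snd p * (fst p ^ 2 + snd p ^ 2) - sqrt (4 - x ^ 2) / 2)) by field.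
  rewrite Rabs_mult, (Rabs_right 12) by lra.
  lra.
Qed.

Lemma ImInt (g : R -> C) : (forall t, 0 <= t <= 1 -> CCont g t) ->
  Im (CRInt g 0 1) = RInt (fun t => snd (g t)) 0 1 /\ ex_RInt (fun t => snd (g t)) 0 1.
Proof.
  intros H.
  assert (Ex : ex_RInt (V:=C_R_CompleteNormedModule) g 0 1).
  { apply ex_RInt_continuous. intros z Hz. rewrite Rmin_left, Rmax_right in Hz by lra. apply H; auto. }
  pose proof (RInt_correct (V:=C_R_CompleteNormedModule) _ _ _ Ex) as Hc.
  pose proof (is_RInt_fct_extend_snd (U:=R_NormedModule) (V:=R_NormedModule) g 0 1 _ Hc) as Hs.
  split.
  - unfold CRInt, Im. symmetry. apply (is_RInt_unique (V:=R_CompleteNormedModule)). exact Hs.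
  - eexists. exact Hs.
Qed.

Lemma integ_cont eta (p d : C) t0 : NC (p + RtoC t0 * d)%C -> NC ((p + Ci * RtoC eta) + RtoC t0 * d)%C ->
  CCont (fun t => integrand eta (p + RtoC t * d) * d)%C t0.
Proof.
  intros H1 H2. unfold integrand.
  eapply (continuous_ext (T:=R_UniformSpace) (U:=C_UniformSpace)
    (fun t => m0 (p + RtoC t * d) * m0 ((p + Ci * RtoC eta) + RtoC t * d)
       * (m0 ((p + Ci * RtoC eta) + RtoC t * d) - m0 (p + RtoC t * d)) * d)%C).
  { intros t. replace (p + RtoC t * d + Ci * RtoC eta)%C with ((p + Ci * RtoC eta) + RtoC t * d)%C by ring.
    reflexivity. }
  pose proof (m0_cont_path _ _ _ H1). pose proof (m0_cont_path _ _ _ H2).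
  apply CC_mult; [|apply CC_const].
  apply CC_mult. apply CC_mult; auto. apply CC_minus; auto.
Qed.

Lemma seg_im eta (p q : C) :
  (forall t, 0 <= t <= 1 -> NC (p + RtoC t * (q - p))%C /\ NC ((p + Ci * RtoC eta) + RtoC t * (q - p))%C) ->
  Im (seg_integral (integrand eta) p q) = RInt (fun t => snd (integrand eta (p + RtoC t * (q - p)) * (q - p))%C) 0 1
  /\ ex_RInt (fun t => snd (integrand eta (p + RtoC t * (q - p)) * (q - p))%C) 0 1.
Proof.
  intros H. unfold seg_integral. apply ImInt. intros t Ht. destruct (H t Ht). apply integ_cont; auto.
Qed.

Lemma abs3 : Rabs 3 = 3.
Proof. apply Rabs_right; lra. Qed.
Lemma absm3 : Rabs (-3) = 3.
Proof. rewrite Rabs_left by lra. lra. Qed.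
Lemma NC_fst (z : C) c : fst z = c -> 2 < Rabs c -> NC z.
Proof. intros e h; right; rewrite e; exact h. Qed.
Lemma NC_snd (z : C) c : snd z = c -> c <> 0 -> NC z.
Proof. intros e h; left; rewrite e; exact h. Qed.

Lemma main_bound eta : 0 < eta ->
  Rabs (Im (rect_integral (integrand eta) 3 (eta / 2)) - 2 * PI) <= 42 * sqrt eta + 4 * eta.
Proof.
  intros He.
  unfold rect_integral. cbv zeta.
  set (v1 := (RtoC (Ropp 3) - Ci * RtoC (eta / 2))%C).
  set (v2 := (RtoC 3 - Ci * RtoC (eta / 2))%C).
  set (v3 := (RtoC 3 + Ci * RtoC (eta / 2))%C).
  set (v4 := (RtoC (Ropp 3) + Ci * RtoC (eta / 2))%C).
  rewrite !im_plus.
  destruct (seg_im eta v1 v2) as [S1 X1].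
  { intros t Ht. split; left; simpl; lra. }
  destruct (seg_im eta v2 v3) as [S2 X2].
  { intros t Ht. split; apply (NC_fst _ 3); try (simpl; ring); rewrite abs3; lra. }
  destruct (seg_im eta v3 v4) as [S3 X3].
  { intros t Ht. split; left; simpl; lra. }
  destruct (seg_im eta v4 v1) as [S4 X4].
  { intros t Ht. split; apply (NC_fst _ (-3)); try (simpl; ring); rewrite absm3; lra. }
  rewrite S1, S2, S3, S4.
  assert (sq0 : 0 <= sqrt eta) by apply sqrt_pos.
  assert (B1 : Rabs (RInt (fun t => snd (integrand eta (v1 + RtoC t * (v2 - v1)) * (v2 - v1))%C) 0 1 - 2 * PI)
               <= (1 - 0) * (36 * sqrt eta)).
  { rewrite <- int_Lf.
    rewrite <- (RInt_minus (V:=R_CompleteNormedModule)) by (auto; apply Lf_ex).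
    apply abs_RInt_le_const. lra.
    apply (ex_RInt_minus (V:=R_NormedModule)); auto; apply Lf_ex.
    intros t Ht.
    replace (v1 + RtoC t * (v2 - v1))%C with (((-3 + 6 * t), (- (eta / 2))%R) : C)
      by (unfold v1, v2; apply C_ext; simpl; ring).
    replace (v2 - v1)%C with (RtoC 6) by (unfold v1, v2; apply C_ext; simpl; ring).
    unfold minus, plus, opp; simpl. unfold Lf.
    apply F_bottom; auto. }
  assert (B2 : Rabs (RInt (fun t => snd (integrand eta (v2 + RtoC t * (v3 - v2)) * (v3 - v2))%C) 0 1)
               <= (1 - 0) * (2 * eta)).
  { apply abs_RInt_le_const. lra. exact X2.
    intros t Ht. eapply Rle_trans; [apply snd_le_Cmod|]. rewrite Cmod_mult.
    replace (v3 - v2)%C with (Ci * RtoC eta)%C by (unfold v2, v3; apply C_ext; simpl; field).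
    rewrite Cmod_imag by lra. apply Rmult_le_compat_r. lra.
    apply F_bound; apply (NC_fst _ 3); try (simpl; field); rewrite abs3; lra. }
  assert (B3 : Rabs (RInt (fun t => snd (integrand eta (v3 + RtoC t * (v4 - v3)) * (v4 - v3))%C) 0 1)
               <= (1 - 0) * (6 * sqrt eta)).
  { apply abs_RInt_le_const. lra. exact X3.
    intros t Ht. eapply Rle_trans; [apply snd_le_Cmod|]. rewrite Cmod_mult.
    replace (v4 - v3)%C with (RtoC (-6)) by (unfold v3, v4; apply C_ext; simpl; ring).
    rewrite Cmod_R, Rabs_left by lra. rewrite Rmult_comm. replace (- -6) with 6 by ring.
    apply Rmult_le_compat_l. lra.
    apply F_top; auto. simpl. lra. }
  assert (B4 : Rabs (RInt (fun t => snd (integrand eta (v4 + RtoC t * (v1 - v4)) * (v1 - v4))%C) 0 1)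
               <= (1 - 0) * (2 * eta)).
  { apply abs_RInt_le_const. lra. exact X4.
    intros t Ht. eapply Rle_trans; [apply snd_le_Cmod|]. rewrite Cmod_mult.
    replace (v1 - v4)%C with (- (Ci * RtoC eta))%C by (unfold v1, v4; apply C_ext; simpl; field).
    rewrite Cmod_opp, Cmod_imag by lra. apply Rmult_le_compat_r. lra.
    apply F_bound; apply (NC_fst _ (-3)); try (simpl; field); rewrite absm3; lra. }
  apply Rabs_le_b in B1. apply Rabs_le_b in B2. apply Rabs_le_b in B3. apply Rabs_le_b in B4.
  apply Rabs_le. lra.
Qed.

Theorem lemma5p5 :
  filterlim (fun eta : R => Im (rect_integral (integrand eta) 3 (eta / 2)))
    (at_right 0) (locally (2 * PI)).
Proof.
  apply filterlim_locally. intros eps.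
  pose proof (cond_pos eps) as Heps.
  set (d := Rmin 1 ((eps / 46) ^ 2)).
  assert (Hd : 0 < d).
  { apply Rmin_pos. lra. apply pow_lt. lra. }
  exists (mkposreal d Hd). intros y Hy Hpos. change R in y.
  cbn in Hy. unfold AbsRing_ball, abs, minus, plus, opp in Hy; simpl in Hy.
  rewrite Ropp_0, Rplus_0_r in Hy. rewrite Rabs_right in Hy by lra.
  assert (y1 : y <= 1) by (pose proof (Rmin_l 1 ((eps / 46) ^ 2)) as H; fold d in H; lra).
  assert (y2 : y < (eps / 46) ^ 2) by (pose proof (Rmin_r 1 ((eps / 46) ^ 2)) as H; fold d in H; lra).
  assert (s1 : sqrt y < eps / 46).
  { rewrite <- (sqrt_pow2 (eps / 46)) by lra. apply sqrt_lt_1_alt. lra. }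
  assert (s2 : y <= sqrt y).
  { pose proof (sqrt_pos y).
    assert (sqrt y <= 1) by (rewrite <- sqrt_1; apply sqrt_le_1_alt; lra).
    apply Rle_trans with (sqrt y * 1); [|lra].
    rewrite <- (sqrt_sqrt y) at 1 by lra. apply Rmult_le_compat_l; auto. }
  pose proof (main_bound y Hpos) as B.
  unfold ball; simpl. unfold AbsRing_ball, abs, minus, plus, opp; simpl.
  change (Rabs (Im (rect_integral (integrand y) 3 (y / 2)) - 2 * PI) < eps).
  pose proof (sqrt_pos y). lra.
Qed.
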